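(* Let $n \ge 4$ and $1 \le a \le b \le n$ be integers, and consider the problem $\mathrm{IK}^n(x_a\cdots x_b)$ of minimizing $x_a x_{a+1}\cdots x_b$ over $\mathcal{X}^n$. Let $l \in \{1,\ldots,n\}$. Then: (a) if $a = b$, then $\bar x(b)$ is a minimizer of $x_b$ over $\mathcal{X}^n$; (b) if $b < n-1$ and $\bar x(l)$ is a minimizer of $x_a\cdots x_b$, then $a \le l \le 2 + \log_2(\log_2 n + \log_2 e)$ or $l = b$; (c) if $a=1$ and $b=n$, then $\bar x(n) = \big(\frac1{s_1},\ldots,\frac1{s_{n-1}},\frac1{s_n-1}\big)$ is the unique minimizer of $x_1\cdots x_n$ over $\mathcal{X}^n$; (d) if $b = n$, then $\bar x(l)$ is a minimizer of $x_a\cdots x_n$ if and only if $l = n$; (e) if $b = n-1$, then $\bar x(l)$ is a minimizer of $x_a\cdots x_{n-1}$ if and only if either $l = n-1$, or $n = 4$, $a\in\{1,2\}$ and $l = 2$.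
   Context: The Sylvester sequence: $s_1 = 2$, $s_i = \prod_{j=1}^{i-1} s_j + 1$ for $i\ge2$. $\mathcal{X}^n$ is the set of $x\in\mathbb{R}^n$ with $x_1+\cdots+x_n = 1$, $1 \ge x_1 \ge \cdots \ge x_n \ge 0$, and $x_1\cdots x_j \le x_{j+1}+\cdots+x_n$ for all $j\in\{1,\ldots,n-1\}$. For $l\in\{1,\ldots,n\}$, $\bar x(l) := \big(\frac{1}{s_1},\ldots,\frac{1}{s_{l-1}}, \frac{1}{(n-l+1)(s_l-1)},\ldots,\frac{1}{(n-l+1)(s_l-1)}\big)\in\mathbb{R}^n$ (last value repeated $n-l+1$ times); these lie in $\mathcal{X}^n$. *)

(* Defs.v *)
(* Stdlib (classical reals); vectors in R^n are functions nat -> R,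
   only the coordinates 1..n are meaningful. *)
From Stdlib Require Import Reals Lra Lia.
Open Scope R_scope.

Fixpoint rsum (f : nat -> R) (a k : nat) : R :=
  match k with O => 0 | S k' => f a + rsum f (S a) k' end.
Fixpoint rprod (f : nat -> R) (a k : nat) : R :=
  match k with O => 1 | S k' => f a * rprod f (S a) k' end.

(* sum_{i=a}^{b} f i, prod_{i=a}^{b} f i (empty if b < a) *)
Definition sum_range (f : nat -> R) (a b : nat) : R := rsum f a (S b - a).
Definition prod_range (f : nat -> R) (a b : nat) : R := rprod f a (S b - a).

(* Sylvester sequence: s_1 = 2, s_i = s_1 ... s_{i-1} + 1.
   sylv_prod k = s_1 * ... * s_k, computed recursively via
   sylv_prod (k+1) = sylv_prod k * s_{k+1} = sylv_prod k * (sylv_prod k + 1). *)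
Fixpoint sylv_prod (k : nat) : R :=
  match k with O => 1 | S k' => sylv_prod k' * (sylv_prod k' + 1) end.
Definition sylv (i : nat) : R := sylv_prod (i - 1) + 1.

Definition in_X (n : nat) (x : nat -> R) : Prop :=
  sum_range x 1 n = 1 /\
  x 1%nat <= 1 /\
  (forall i : nat, (1 <= i < n)%nat -> x (S i) <= x i) /\
  0 <= x n /\
  (forall j : nat, (1 <= j <= n - 1)%nat ->
     prod_range x 1 j <= sum_range x (S j) n).

Definition xbar (n l : nat) (i : nat) : R :=
  if (i <? l)%nat then / sylv i
  else / (INR (n - l + 1) * (sylv l - 1)).

Definition is_minimizer (n a b : nat) (x : nat -> R) : Prop :=
  in_X n x /\ forall y, in_X n y -> prod_range x a b <= prod_range y a b.

Definition log2 (t : R) : R := ln t / ln 2.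

(* Main.v *)
Require Import Defs.
From Stdlib Require Import Reals Lra Lia.
Open Scope R_scope.

Lemma ln_le_sub1 r : 0 < r -> ln r <= r - 1.
Proof. intro H. pose proof (exp_ineq1_le (ln r)) as H0. rewrite exp_ln in H0; lra. Qed.
Lemma ln_lt_sub1 r : 0 < r -> r <> 1 -> ln r < r - 1.
Proof. intros H H1. pose proof (exp_ineq1 (ln r) (ln_neq_0 r H1 H)) as H0.
  rewrite exp_ln in H0; lra. Qed.
Lemma ln_div p m : 0 < p -> 0 < m -> ln (p * / m) = ln p - ln m.
Proof. intros. rewrite ln_mult, ln_Rinv; try lra. apply Rinv_0_lt_compat; lra. Qed.
Lemma ln_le_mono x y : 0 < x -> x <= y -> ln x <= ln y.
Proof. intros H1 H2. destruct (Req_dec x y). subst; lra. left; apply ln_increasing; lra. Qed.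

Lemma rsum_ext f g a k : (forall i, (a <= i < a + k)%nat -> f i = g i) ->
  rsum f a k = rsum g a k.
Proof. revert a; induction k; intros a H; simpl; auto.
  rewrite H by lia. rewrite (IHk (S a)) by (intros; apply H; lia). reflexivity. Qed.
Lemma rsum_le f g a k : (forall i, (a <= i < a + k)%nat -> f i <= g i) ->
  rsum f a k <= rsum g a k.
Proof. revert a; induction k; intros a H; simpl. lra.
  apply Rplus_le_compat. apply H; lia. apply IHk; intros; apply H; lia. Qed.
Lemma rsum_split f a k1 k2 : rsum f a (k1 + k2) = rsum f a k1 + rsum f (a + k1) k2.
Proof. revert a; induction k1; intros a; simpl. rewrite Nat.add_0_r; ring.
  rewrite IHk1. replace (S a + k1)%nat with (a + S k1)%nat by lia. ring. Qed.
Lemma rsum_last f a k : rsum f a (S k) = rsum f a k + f (a + k)%nat.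
Proof. replace (S k) with (k + 1)%nat by lia. rewrite rsum_split. simpl. ring. Qed.
Lemma rsum_plus f g a k : rsum (fun i => f i + g i) a k = rsum f a k + rsum g a k.
Proof. revert a; induction k; intros a; simpl. ring. rewrite IHk; ring. Qed.
Lemma rsum_minus f g a k : rsum (fun i => f i - g i) a k = rsum f a k - rsum g a k.
Proof. revert a; induction k; intros a; simpl. ring. rewrite IHk; ring. Qed.
Lemma rsum_scal c f a k : rsum (fun i => c * f i) a k = c * rsum f a k.
Proof. revert a; induction k; intros a; simpl. ring. rewrite IHk; ring. Qed.
Lemma rsum_const c a k : rsum (fun _ => c) a k = INR k * c.
Proof. revert a; induction k; intros a; simpl rsum. simpl; ring.
  rewrite IHk, S_INR; ring. Qed.
Lemma rsum_nonneg f a k : (forall i, (a <= i < a + k)%nat -> 0 <= f i) -> 0 <= rsum f a k.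
Proof. intro H. replace 0 with (rsum (fun _ => 0) a k).
  apply rsum_le; auto. rewrite rsum_const; ring. Qed.
Lemma rsum_zero_each f a k : (forall i, (a <= i < a + k)%nat -> 0 <= f i) ->
  rsum f a k <= 0 -> forall i, (a <= i < a + k)%nat -> f i = 0.
Proof. revert a; induction k; intros a H Hs i Hi. lia. simpl in Hs.
  assert (0 <= rsum f (S a) k) by (apply rsum_nonneg; intros; apply H; lia).
  assert (0 <= f a) by (apply H; lia).
  destruct (Nat.eq_dec i a). subst; lra.
  apply (IHk (S a)); try lia. intros; apply H; lia. lra. Qed.
Lemma rsum_bounds f a k lo hi : (forall i, (a <= i < a + k)%nat -> lo <= f i <= hi) ->
  INR k * lo <= rsum f a k <= INR k * hi.
Proof. intro H. rewrite <- !rsum_const with (a:=a). split; apply rsum_le; intros; apply H; auto. Qed.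

Lemma rprod_ext f g a k : (forall i, (a <= i < a + k)%nat -> f i = g i) ->
  rprod f a k = rprod g a k.
Proof. revert a; induction k; intros a H; simpl; auto.
  rewrite H by lia. rewrite (IHk (S a)) by (intros; apply H; lia). reflexivity. Qed.
Lemma rprod_split f a k1 k2 : rprod f a (k1 + k2) = rprod f a k1 * rprod f (a + k1) k2.
Proof. revert a; induction k1; intros a; simpl. rewrite Nat.add_0_r; ring.
  rewrite IHk1. replace (S a + k1)%nat with (a + S k1)%nat by lia. ring. Qed.
Lemma rprod_last f a k : rprod f a (S k) = rprod f a k * f (a + k)%nat.
Proof. replace (S k) with (k + 1)%nat by lia. rewrite rprod_split. simpl. ring. Qed.
Lemma rprod_pos f a k : (forall i, (a <= i < a + k)%nat -> 0 < f i) -> 0 < rprod f a k.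
Proof. revert a; induction k; intros a H; simpl. lra.
  apply Rmult_lt_0_compat. apply H; lia. apply IHk; intros; apply H; lia. Qed.
Lemma ln_rprod f a k : (forall i, (a <= i < a + k)%nat -> 0 < f i) ->
  ln (rprod f a k) = rsum (fun i => ln (f i)) a k.
Proof. revert a; induction k; intros a H; simpl. apply ln_1.
  rewrite ln_mult. rewrite IHk. reflexivity. intros; apply H; lia. apply H; lia.
  apply rprod_pos; intros; apply H; lia. Qed.
Lemma rprod_01 f a k : (forall i, (a <= i < a + k)%nat -> 0 <= f i <= 1) ->
  0 <= rprod f a k <= 1.
Proof. revert a; induction k; intros a H; simpl. lra.
  assert (H1 := H a ltac:(lia)). assert (H2 := IHk (S a) ltac:(intros; apply H; lia)).
  split. apply Rmult_le_pos; lra.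
  replace 1 with (1*1) by ring. apply Rmult_le_compat; lra. Qed.

Lemma abel_pre_aux (w d : nat -> R) a K :
  (forall i, (a <= i)%nat -> (S i <= a + K)%nat -> w (S i) <= w i) ->
  (forall m, (m <= S K)%nat -> 0 <= rsum d a m) ->
  w (a + K)%nat * rsum d a (S K) <= rsum (fun i => w i * d i) a (S K).
Proof. induction K; intros Hw Hd.
  - simpl. rewrite Nat.add_0_r. lra.
  - rewrite (rsum_last (fun i => w i * d i)), (rsum_last d).
    assert (IH := IHK ltac:(intros; apply Hw; lia) ltac:(intros; apply Hd; lia)).
    assert (HD := Hd (S K) ltac:(lia)).
    assert (Hw1 := Hw (a + K)%nat ltac:(lia) ltac:(lia)).
    replace (S (a + K)) with (a + S K)%nat in Hw1 by lia.
    assert (w (a + S K)%nat * rsum d a (S K) <= w (a + K)%nat * rsum d a (S K))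
      by (apply Rmult_le_compat_r; lra).
    lra.
Qed.

Lemma abel_pre (w d : nat -> R) a K :
  (forall i, (a <= i)%nat -> (S i < a + K)%nat -> w (S i) <= w i) ->
  (forall i, (a <= i < a + K)%nat -> 0 <= w i) ->
  (forall m, (m <= K)%nat -> 0 <= rsum d a m) ->
  0 <= rsum (fun i => w i * d i) a K.
Proof. intros Hw Hp Hd. destruct K. simpl; lra.
  eapply Rle_trans; [|apply abel_pre_aux].
  apply Rmult_le_pos. apply Hp; lia. apply Hd; lia.
  intros; apply Hw; lia. auto. Qed.

Lemma abel_suf (w d : nat -> R) K : forall a,
  (forall i, (a <= i)%nat -> (S i < a + K)%nat -> w i <= w (S i)) ->
  (forall m, (a <= m <= a + K)%nat -> 0 <= rsum d m (a + K - m)) ->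
  w a * rsum d a K <= rsum (fun i => w i * d i) a K.
Proof. induction K; intros a Hw Hd. simpl; lra.
  simpl. assert (IH := IHK (S a) ltac:(intros; apply Hw; lia)
     ltac:(intros m Hm; replace (S a + K - m)%nat with (a + S K - m)%nat by lia; apply Hd; lia)).
  assert (HE := Hd (S a) ltac:(lia)). replace (a + S K - S a)%nat with K in HE by lia.
  destruct K. simpl in *. lra.
  assert (w a <= w (S a)) by (apply Hw; lia).
  assert (w a * rsum d (S a) (S K) <= w (S a) * rsum d (S a) (S K))
    by (apply Rmult_le_compat_r; lra).
  lra.
Qed.

Lemma logmaj (x y : nat -> R) a K :
  (forall i, (a <= i < a + K)%nat -> 0 < x i /\ 0 < y i) ->
  (forall i, (a <= i)%nat -> (S i < a + K)%nat -> x (S i) <= x i) ->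
  (forall m, (m <= K)%nat -> 0 <= rsum (fun i => ln (y i) - ln (x i)) a m) ->
  rsum x a K <= rsum y a K.
Proof. intros Hp Hdec Hd.
  assert (H := abel_pre x (fun i => ln (y i) - ln (x i)) a K Hdec
     ltac:(intros i Hi; destruct (Hp i Hi); lra) Hd).
  assert (rsum (fun i => x i * (ln (y i) - ln (x i))) a K <= rsum (fun i => y i - x i) a K).
  { apply rsum_le. intros i Hi. destruct (Hp i Hi) as [Hx Hy].
    rewrite <- ln_div by auto. pose proof (ln_le_sub1 (y i * / x i)) as L.
    assert (0 < y i * / x i) by (apply Rmult_lt_0_compat; auto; apply Rinv_0_lt_compat; auto).
    specialize (L H0).
    apply Rmult_le_compat_l with (r := x i) in L; [|lra].
    replace (x i * (y i * / x i - 1)) with (y i - x i) in L by (field; lra). lra. }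
  rewrite rsum_minus in H0. lra.
Qed.

Lemma SM_aux (z y : nat -> R) a K :
  (forall i, (a <= i < a + K)%nat -> 0 < z i /\ 0 < y i) ->
  (forall i, (a <= i)%nat -> (S i < a + K)%nat -> z (S i) <= z i) ->
  (forall m, (a <= m <= a + K)%nat -> rsum y m (a + K - m) <= rsum z m (a + K - m)) ->
  0 <= rsum (fun i => / z i * (z i - y i)) a K.
Proof. intros Hp Hdec Hs.
  destruct K. simpl; lra.
  eapply Rle_trans; [|apply abel_suf].
  apply Rmult_le_pos. left; apply Rinv_0_lt_compat; apply Hp; lia.
  rewrite rsum_minus.
  assert (H := Hs a ltac:(lia)). replace (a + S K - a)%nat with (S K) in H by lia. lra.
  intros i H1 H2. apply Rinv_le_contravar. apply Hp; lia. apply Hdec; lia.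
  intros m Hm. rewrite rsum_minus. specialize (Hs m Hm). lra.
Qed.

Lemma SM_pt z y : 0 < z -> 0 < y -> / z * (z - y) <= ln z - ln y.
Proof. intros. pose proof (ln_le_sub1 (y * / z)) as L.
  assert (0 < y * / z) by (apply Rmult_lt_0_compat; auto; apply Rinv_0_lt_compat; auto).
  rewrite ln_div in L by auto.
  replace (/ z * (z - y)) with (1 - y * / z) by (field; lra). lra. Qed.

Lemma SM (z y : nat -> R) a K :
  (forall i, (a <= i < a + K)%nat -> 0 < z i /\ 0 < y i) ->
  (forall i, (a <= i)%nat -> (S i < a + K)%nat -> z (S i) <= z i) ->
  (forall m, (a <= m <= a + K)%nat -> rsum y m (a + K - m) <= rsum z m (a + K - m)) ->
  rsum (fun i => ln (y i)) a K <= rsum (fun i => ln (z i)) a K.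
Proof. intros Hp Hdec Hs. assert (H := SM_aux z y a K Hp Hdec Hs).
  assert (rsum (fun i => / z i * (z i - y i)) a K <= rsum (fun i => ln (z i) - ln (y i)) a K).
  { apply rsum_le. intros i Hi. destruct (Hp i Hi). apply SM_pt; auto. }
  rewrite rsum_minus in H0. lra. Qed.

Lemma SM_eq (z y : nat -> R) a K :
  (forall i, (a <= i < a + K)%nat -> 0 < z i /\ 0 < y i) ->
  (forall i, (a <= i)%nat -> (S i < a + K)%nat -> z (S i) <= z i) ->
  (forall m, (a <= m <= a + K)%nat -> rsum y m (a + K - m) <= rsum z m (a + K - m)) ->
  rsum (fun i => ln (z i)) a K <= rsum (fun i => ln (y i)) a K ->
  forall i, (a <= i < a + K)%nat -> z i = y i.
Proof. intros Hp Hdec Hs Heq. assert (H := SM_aux z y a K Hp Hdec Hs).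
  set (g := fun i => (ln (z i) - ln (y i)) - / z i * (z i - y i)).
  assert (Hg : forall i, (a <= i < a + K)%nat -> g i = 0).
  { apply rsum_zero_each. intros i Hi. unfold g. destruct (Hp i Hi).
    pose proof (SM_pt (z i) (y i)); lra.
    unfold g. rewrite rsum_minus, rsum_minus. lra. }
  intros i Hi. specialize (Hg i Hi). unfold g in Hg. destruct (Hp i Hi) as [Hz Hy].
  destruct (Req_dec (y i * / z i) 1) as [E|E].
  - apply (f_equal (fun t => t * z i)) in E. rewrite Rmult_assoc, Rinv_l in E by lra. lra.
  - assert (0 < y i * / z i) by (apply Rmult_lt_0_compat; auto; apply Rinv_0_lt_compat; auto).
    pose proof (ln_lt_sub1 _ H0 E). rewrite ln_div in H1 by auto.
    replace (/ z i * (z i - y i)) with (1 - y i * / z i) in Hg by (field; lra). lra.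
Qed.

Lemma ln_concave lam p q : 0 <= lam <= 1 -> 0 < p -> 0 < q ->
  lam * ln p + (1 - lam) * ln q <= ln (lam * p + (1 - lam) * q).
Proof. intros Hl Hp Hq. set (m := lam * p + (1 - lam) * q).
  assert (Hm : 0 < m). { unfold m. destruct (Req_dec lam 0). subst; lra. nra. }
  pose proof (ln_le_sub1 (p * / m)) as L1. pose proof (ln_le_sub1 (q * / m)) as L2.
  rewrite ln_div in L1, L2 by auto.
  assert (0 < p * / m) by (apply Rmult_lt_0_compat; auto; apply Rinv_0_lt_compat; auto).
  assert (0 < q * / m) by (apply Rmult_lt_0_compat; auto; apply Rinv_0_lt_compat; auto).
  specialize (L1 H). specialize (L2 H0).
  assert (lam * (ln p - ln m) + (1 - lam) * (ln q - ln m) <= lam * (p * / m - 1) + (1 - lam) * (q * / m - 1)).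
  { apply Rplus_le_compat; apply Rmult_le_compat_l; lra. }
  replace (lam * (p * / m - 1) + (1 - lam) * (q * / m - 1)) with ((lam * p + (1-lam) * q) * / m - 1) in H1 by ring.
  fold m in H1. rewrite Rinv_r in H1 by lra. lra.
Qed.

Lemma Pi_S k : sylv_prod (S k) = sylv_prod k * (sylv_prod k + 1).
Proof. reflexivity. Qed.
Lemma Pi_ge1 k : 1 <= sylv_prod k.
Proof. induction k. simpl; lra. rewrite Pi_S. nra. Qed.
Lemma Pi_pos k : 0 < sylv_prod k.
Proof. pose proof (Pi_ge1 k); lra. Qed.
Lemma Pi_mono k : sylv_prod k <= sylv_prod (S k).
Proof. rewrite Pi_S. pose proof (Pi_ge1 k); nra. Qed.
Lemma Pi_mono_le j k : (j <= k)%nat -> sylv_prod j <= sylv_prod k.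
Proof. induction 1. lra. pose proof (Pi_mono m); lra. Qed.
Lemma Pi_ge2 k : (1 <= k)%nat -> 2 <= sylv_prod k.
Proof. intro H. assert (sylv_prod 1 <= sylv_prod k) by (apply Pi_mono_le; lia).
  simpl in H0. lra. Qed.
Lemma Pi_ge6 k : (2 <= k)%nat -> 6 <= sylv_prod k.
Proof. intro H. assert (sylv_prod 2 <= sylv_prod k) by (apply Pi_mono_le; lia).
  simpl in H0. lra. Qed.
Lemma sylv_S k : sylv (S k) = sylv_prod k + 1.
Proof. unfold sylv. replace (S k - 1)%nat with k by lia. reflexivity. Qed.
Lemma sylv_ge2 i : 2 <= sylv i.
Proof. unfold sylv. pose proof (Pi_ge1 (i-1)); lra. Qed.
Lemma sylv_pos i : 0 < sylv i.
Proof. pose proof (sylv_ge2 i); lra. Qed.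
Lemma inv_sylv k : / sylv (S k) = / sylv_prod k - / sylv_prod (S k).
Proof. rewrite sylv_S, Pi_S. pose proof (Pi_ge1 k). field; lra. Qed.
Lemma tele j K : rsum (fun i => / sylv i) (S j) K = / sylv_prod j - / sylv_prod (j + K).
Proof. revert j; induction K; intros j; simpl rsum. rewrite Nat.add_0_r; ring.
  rewrite IHK, inv_sylv. replace (S j + K)%nat with (j + S K)%nat by lia. ring. Qed.
Lemma ln_tele j K : rsum (fun i => ln (/ sylv i)) (S j) K = ln (sylv_prod j) - ln (sylv_prod (j + K)).
Proof. revert j; induction K; intros j; simpl rsum. rewrite Nat.add_0_r; ring.
  rewrite IHK. replace (S j + K)%nat with (j + S K)%nat by lia.
  rewrite Pi_S, ln_Rinv, sylv_S by apply sylv_pos. pose proof (Pi_ge1 j).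
  rewrite ln_mult by lra. ring. Qed.
Lemma prod_inv_sylv j : rprod (fun i => / sylv i) 1 j = / sylv_prod j.
Proof. induction j. simpl; lra. rewrite rprod_last, IHj. simpl (1 + j)%nat.
  rewrite sylv_S, Pi_S. pose proof (Pi_ge1 j). field; lra. Qed.

Definition cc (n l : nat) : R := / (INR (n - l + 1) * sylv_prod (l - 1)).

Lemma xbar_lt n l i : (i < l)%nat -> xbar n l i = / sylv i.
Proof. intro H. unfold xbar. apply Nat.ltb_lt in H. rewrite H. reflexivity. Qed.
Lemma xbar_ge n l i : (l <= i)%nat -> xbar n l i = cc n l.
Proof. intro H. unfold xbar, cc. assert ((i <? l)%nat = false) by (apply Nat.ltb_ge; lia).
  rewrite H0. unfold sylv. f_equal. f_equal. ring. Qed.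
Lemma INRpos k : (1 <= k)%nat -> 0 < INR k.
Proof. intro; apply lt_0_INR; lia. Qed.
Lemma cc_pos n l : 0 < cc n l.
Proof. unfold cc. apply Rinv_0_lt_compat. apply Rmult_lt_0_compat.
  apply INRpos; lia. apply Pi_pos. Qed.
Lemma cc_le1 n l : cc n l <= 1.
Proof. unfold cc. assert (1 <= INR (n - l + 1)) by (apply (le_INR 1); lia).
  pose proof (Pi_ge1 (l-1)). rewrite <- Rinv_1. apply Rinv_le_contravar. lra. nra. Qed.
Lemma xbar_pos n l i : 0 < xbar n l i.
Proof. destruct (Nat.lt_ge_cases i l). rewrite xbar_lt by auto. apply Rinv_0_lt_compat, sylv_pos.
  rewrite xbar_ge by auto. apply cc_pos. Qed.
Lemma xbar_le1 n l i : xbar n l i <= 1.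
Proof. destruct (Nat.lt_ge_cases i l). rewrite xbar_lt by auto. pose proof (sylv_ge2 i).
  rewrite <- Rinv_1. apply Rinv_le_contravar; lra.
  rewrite xbar_ge by auto. apply cc_le1. Qed.

Lemma suf_le n l m : (1 <= m <= l)%nat -> (l <= n)%nat ->
  rsum (xbar n l) m (S n - m) = / sylv_prod (m - 1).
Proof. intros H1 H2. replace (S n - m)%nat with ((l - m) + (S n - l))%nat by lia.
  rewrite rsum_split. rewrite (rsum_ext (xbar n l) (fun i => / sylv i)) by (intros; apply xbar_lt; lia).
  rewrite (rsum_ext (xbar n l) (fun _ => cc n l)) by (intros; apply xbar_ge; lia).
  replace m with (S (m - 1)) at 1 by lia. rewrite tele, rsum_const.
  replace (m - 1 + (l - m))%nat with (l - 1)%nat by lia.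
  replace (S n - l)%nat with (n - l + 1)%nat by lia. unfold cc.
  assert (0 < INR (n - l + 1)) by (apply INRpos; lia). pose proof (Pi_pos (l-1)). pose proof (Pi_pos (m-1)).
  field. repeat split; lra. Qed.
Lemma suf_gt n l m : (l < m)%nat ->
  rsum (xbar n l) m (S n - m) = INR (S n - m) * cc n l.
Proof. intros H. rewrite (rsum_ext (xbar n l) (fun _ => cc n l)) by (intros; apply xbar_ge; lia).
  apply rsum_const. Qed.

Lemma cc_Sl n l : (l < n)%nat -> cc n (S l) = / (INR (n - l) * sylv_prod l).
Proof. intro. unfold cc. replace (n - S l + 1)%nat with (n - l)%nat by lia.
  replace (S l - 1)%nat with l by lia. reflexivity. Qed.
Lemma cc_n n : (1 <= n)%nat -> cc n n = / sylv_prod (n - 1).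
Proof. intro. unfold cc. replace (n - n + 1)%nat with 1%nat by lia. simpl INR. f_equal; ring. Qed.

Lemma cc_dec n l : (3 <= n)%nat -> (1 <= l < n)%nat -> cc n (S l) < cc n l.
Proof. intros Hn Hl. rewrite cc_Sl by lia. unfold cc.
  replace (n - l + 1)%nat with (S (n - l)) by lia. rewrite S_INR.
  replace l with (S (l - 1)) at 2 by lia. rewrite Pi_S.
  set (p := sylv_prod (l - 1)). set (d := INR (n - l)).
  assert (Hp : 1 <= p) by apply Pi_ge1. assert (Hd : 1 <= d) by (apply (le_INR 1); lia).
  assert (Hx : 1 < d * p).
  { destruct (Nat.eq_dec (n - l) 1).
    - assert (2 <= p) by (apply Pi_ge2; lia). unfold d. rewrite e. simpl. lra.
    - assert (2 <= d) by (apply (le_INR 2); lia). nra. }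
  apply Rinv_lt_contravar. apply Rmult_lt_0_compat; nra. nra. Qed.
Lemma cc_dec_le n l l' : (3 <= n)%nat -> (1 <= l)%nat -> (l < l')%nat -> (l' <= n)%nat -> cc n l' < cc n l.
Proof. intros Hn H1. induction 1; intros H2. apply cc_dec; lia.
  pose proof (cc_dec n m Hn ltac:(lia)). specialize (IHle ltac:(lia)). lra. Qed.


Lemma xbar_dec n l i : (1 <= l)%nat -> (1 <= i)%nat -> xbar n l (S i) <= xbar n l i.
Proof. intros Hl Hi. destruct (Nat.lt_ge_cases (S i) l).
  - rewrite !xbar_lt by lia. apply Rinv_le_contravar. apply sylv_pos.
    unfold sylv. replace (S i - 1)%nat with i by lia. pose proof (Pi_mono_le (i-1) i ltac:(lia)). lra.
  - destruct (Nat.eq_dec (S i) l).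
    + rewrite xbar_ge by lia. rewrite xbar_lt by lia. unfold cc. apply Rinv_le_contravar. apply sylv_pos.
      replace (l - 1)%nat with (S (i - 1)) by lia. rewrite Pi_S. unfold sylv.
      assert (1 <= INR (n - l + 1)) by (apply (le_INR 1); lia). pose proof (Pi_ge1 (i-1)).
      replace (sylv_prod (i - 1) * (sylv_prod (i - 1) + 1)) with ((sylv_prod (i - 1) + 1) * sylv_prod (i - 1)) by ring.
      nra.
    + rewrite !xbar_ge by lia. lra.
Qed.

Lemma in_X_xbar n l : (1 <= l <= n)%nat -> in_X n (xbar n l).
Proof. intros Hl. unfold in_X. repeat split.
  - unfold sum_range. rewrite suf_le by lia. simpl. apply Rinv_1.
  - apply xbar_le1.
  - intros i Hi. apply xbar_dec; lia.
  - left; apply xbar_pos.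
  - intros j Hj. unfold prod_range, sum_range. replace (S j - 1)%nat with j by lia.
    destruct (Nat.le_gt_cases (S j) l).
    + rewrite suf_le by lia. rewrite (rprod_ext _ (fun i => / sylv i)) by (intros; apply xbar_lt; lia).
      rewrite prod_inv_sylv. replace (S j - 1)%nat with j by lia. lra.
    + rewrite suf_gt by lia. replace j with (S (j - 1)) at 1 by lia. rewrite rprod_last.
      replace (1 + (j - 1))%nat with j by lia. rewrite xbar_ge by lia.
      assert (0 <= rprod (xbar n l) 1 (j - 1) <= 1).
      { apply rprod_01. intros; split. left; apply xbar_pos. apply xbar_le1. }
      pose proof (cc_pos n l). assert (1 <= INR (S n - S j)) by (apply (le_INR 1); lia).
      nra.
Qed.

Section X.
Variable n : nat.
Variable x : nat -> R.
Hypothesis Hn : (2 <= n)%nat.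
Hypothesis HX : in_X n x.

Lemma X_sum : rsum x 1 n = 1.
Proof. destruct HX as [H _]. unfold sum_range in H. replace (S n - 1)%nat with n in H by lia. auto. Qed.
Lemma X_dec i j : (1 <= i)%nat -> (i <= j <= n)%nat -> x j <= x i.
Proof. intros H1 H2. destruct HX as [_ [_ [Hd _]]]. destruct H2 as [H2 H3].
  induction H2. lra. assert (x (S m) <= x m) by (apply Hd; lia). specialize (IHle ltac:(lia)). lra. Qed.
Lemma X_nonneg i : (1 <= i <= n)%nat -> 0 <= x i.
Proof. intros H. destruct HX as [_ [_ [_ [H0 _]]]]. pose proof (X_dec i n ltac:(lia) ltac:(lia)). lra. Qed.
Lemma X_cons j : (1 <= j <= n - 1)%nat -> rprod x 1 j <= rsum x (S j) (n - j).
Proof. intros H. destruct HX as [_ [_ [_ [_ H0]]]]. specialize (H0 j H).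
  unfold prod_range, sum_range in H0. replace (S j - 1)%nat with j in H0 by lia. exact H0. Qed.
Lemma X_pos_all i : (i <= n)%nat -> forall j, (1 <= j <= i)%nat -> 0 < x j.
Proof. induction i; intros H j Hj. lia.
  destruct (Nat.eq_dec j (S i)); [subst j|apply IHi; lia].
  destruct (Nat.eq_dec i 0).
  - subst. destruct (Rle_lt_dec (x 1) 0); auto.
    assert (rsum x 1 n <= INR n * x 1).
    { eapply Rle_trans. apply (rsum_bounds x 1 n 0 (x 1)). intros; split. apply X_nonneg; lia. apply X_dec; lia. lra. }
    rewrite X_sum in H0. assert (0 <= INR n) by apply pos_INR. nra.
  - assert (Hp : 0 < rprod x 1 i) by (apply rprod_pos; intros; apply IHi; lia).
    assert (H1 := X_cons i ltac:(lia)).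
    assert (rsum x (S i) (n - i) <= INR (n - i) * x (S i)).
    { eapply Rle_trans. apply (rsum_bounds x (S i) (n - i) 0 (x (S i))). intros; split. apply X_nonneg; lia. apply X_dec; lia. lra. }
    assert (0 <= INR (n - i)) by apply pos_INR. destruct (Rle_lt_dec (x (S i)) 0); auto. nra.
Qed.
Lemma X_pos i : (1 <= i <= n)%nat -> 0 < x i.
Proof. intros. apply (X_pos_all n); lia. Qed.

Lemma find_j k : exists j, (j <= k)%nat /\ 1 <= rprod x 1 j * sylv_prod j /\
  forall m, (j < m <= k)%nat -> rprod x 1 m * sylv_prod m < 1.
Proof. induction k.
  - exists 0%nat. simpl. split. lia. split. lra. intros; lia.
  - destruct (Rle_lt_dec 1 (rprod x 1 (S k) * sylv_prod (S k))).
    + exists (S k). split. lia. split. auto. intros; lia.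
    + destruct IHk as [j [H1 [H2 H3]]]. exists j. split. lia. split. auto.
      intros m Hm. destruct (Nat.eq_dec m (S k)). subst; auto. apply H3; lia.
Qed.

Lemma tailT k : (k <= n - 1)%nat -> / sylv_prod k <= rsum x (S k) (n - k).
Proof. intros Hk. destruct (find_j k) as [j [H1 [H2 H3]]].
  assert (Hj : / sylv_prod j <= rsum x (S j) (n - j)).
  { destruct (Nat.eq_dec j 0). subst. simpl. rewrite Nat.sub_0_r, X_sum. lra.
    pose proof (X_cons j ltac:(lia)). pose proof (Pi_pos j).
    assert (/ sylv_prod j <= rprod x 1 j).
    { apply (Rmult_le_reg_r (sylv_prod j)); auto. rewrite Rinv_l; lra. } lra. }
  replace (n - j)%nat with ((k - j) + (n - k))%nat in Hj by lia. rewrite rsum_split in Hj.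
  replace (S j + (k - j))%nat with (S k) in Hj by lia.
  assert (Hb : rsum x (S j) (k - j) <= rsum (fun i => / sylv i) (S j) (k - j)).
  { apply logmaj.
    - intros i Hi. split. apply X_pos; lia. apply Rinv_0_lt_compat, sylv_pos.
    - intros i Hi1 Hi2. apply X_dec; lia.
    - intros m Hm. rewrite rsum_minus. rewrite ln_tele.
      rewrite <- ln_rprod by (intros; apply X_pos; lia).
      assert (Hpj : 0 < rprod x 1 j) by (apply rprod_pos; intros; apply X_pos; lia).
      assert (Hpm : 0 < rprod x (S j) m) by (apply rprod_pos; intros; apply X_pos; lia).
      assert (E : rprod x 1 (j + m) = rprod x 1 j * rprod x (S j) m).
      { rewrite rprod_split. replace (1 + j)%nat with (S j) by lia. reflexivity. }
      assert (ln (rprod x 1 (j + m) * sylv_prod (j + m)) <= ln (rprod x 1 j * sylv_prod j)).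
      { apply ln_le_mono. apply Rmult_lt_0_compat. rewrite E; apply Rmult_lt_0_compat; auto. apply Pi_pos.
        destruct (Nat.eq_dec m 0). subst. rewrite Nat.add_0_r. lra.
        specialize (H3 (j + m)%nat ltac:(lia)). lra. }
      rewrite E, !ln_mult in H by (auto using Pi_pos, Rmult_lt_0_compat).
      lra. }
  rewrite tele in Hb. replace (j + (k - j))%nat with k in Hb by lia. lra.
Qed.

Lemma tail_suf m : (1 <= m <= n)%nat -> / sylv_prod (m - 1) <= rsum x m (S n - m).
Proof. intros H. replace m with (S (m - 1)) at 2 by lia.
  replace (S n - m)%nat with (n - (m - 1))%nat by lia. apply tailT. lia. Qed.

End X.

Lemma pow_pos' x k : 0 < x -> 0 < x ^ k.
Proof. intros; apply pow_lt; auto. Qed.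

Lemma INR_ge3 m : (3 <= m)%nat -> 3 <= INR m.
Proof. intro H. replace 3 with (INR 3) by (simpl; lra). apply le_INR; auto. Qed.

Lemma twoP k p : (2 <= k)%nat -> 1 <= p -> 2 ^ k * p <= (p + 1) ^ k.
Proof. intros Hk Hp. induction Hk. simpl. pose proof (Rle_0_sqr (p - 1)). unfold Rsqr in *. nra.
  simpl. assert (0 <= 2 ^ m) by (left; apply pow_pos'; lra). assert (0 < (p+1) ^ m) by (apply pow_pos'; lra). nra. Qed.

Lemma three_half k : (3 <= k)%nat -> INR k < (3/2) ^ k.
Proof. intros Hk. induction Hk. simpl. lra.
  rewrite S_INR. simpl. assert (3 <= INR m) by (apply INR_ge3; auto). nra. Qed.

Lemma twoK k : (3 <= k)%nat -> (INR k + 1) ^ k * INR k < (2 * INR k) ^ k.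
Proof. intros Hk. assert (H3 : 3 <= INR k) by (apply INR_ge3; auto).
  assert (H1 : (3/2 * (INR k + 1)) ^ k <= (2 * INR k) ^ k) by (apply pow_incr; lra).
  rewrite Rpow_mult_distr in H1. pose proof (three_half k Hk).
  assert (0 < (INR k + 1) ^ k) by (apply pow_pos'; lra). nra. Qed.

Lemma polyE k p : (3 <= k)%nat -> 1 <= p ->
  (INR k + 1) ^ k * p < (p + 1) ^ k * INR k ^ (k - 1).
Proof. intros Hk Hp. pose proof (twoK k Hk). pose proof (twoP k p ltac:(lia) Hp).
  assert (H3 : 3 <= INR k) by (apply INR_ge3; auto).
  assert (E : INR k ^ k = INR k ^ (k - 1) * INR k).
  { destruct k. lia. simpl. rewrite Nat.sub_0_r. ring. }
  rewrite Rpow_mult_distr, E in H.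
  assert (0 < INR k ^ (k - 1)) by (apply pow_pos'; lra).
  assert (0 < 2 ^ k) by (apply pow_pos'; lra).
  apply (Rmult_lt_reg_r (INR k)). lra.
  assert ((INR k + 1) ^ k * p * INR k < 2 ^ k * (INR k ^ (k - 1) * INR k) * p) by nra.
  assert (2 ^ k * p * (INR k ^ (k - 1) * INR k) <= (p + 1) ^ k * (INR k ^ (k - 1) * INR k)).
  { apply Rmult_le_compat_r. nra. auto. } nra. Qed.

Lemma conv_gen (d j : nat) (p : R) : 1 <= p -> (1 <= d)%nat ->
  ((INR d + 1) * p) ^ (S j) = ((INR d + 1) ^ (S j) * p) * p ^ j /\ (p + 1) * (INR d * (p * (p + 1))) ^ j = ((p + 1) ^ (S j) * INR d ^ j) * p ^ j.
Proof. intros. rewrite !Rpow_mult_distr. simpl. split; ring. Qed.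

Lemma conv_lt (d j : nat) (p : R) : 1 <= p -> (1 <= d)%nat ->
  (INR d + 1) ^ (S j) * p < (p + 1) ^ (S j) * INR d ^ j ->
  / (p + 1) * (/ (INR d * (p * (p + 1)))) ^ j < (/ ((INR d + 1) * p)) ^ (S j).
Proof. intros Hp Hd H. assert (HD : 1 <= INR d) by (apply (le_INR 1); auto).
  rewrite !pow_inv, <- Rinv_mult. apply Rinv_lt_contravar.
  apply Rmult_lt_0_compat; [apply pow_pos'; nra | apply Rmult_lt_0_compat; [lra | apply pow_pos'; nra]].
  destruct (conv_gen d j p Hp Hd) as [E1 E2]. rewrite E1, E2.
  apply Rmult_lt_compat_r. apply pow_pos'; lra. auto. Qed.
Lemma conv_le (d j : nat) (p : R) : 1 <= p -> (1 <= d)%nat ->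
  (INR d + 1) ^ (S j) * p <= (p + 1) ^ (S j) * INR d ^ j ->
  / (p + 1) * (/ (INR d * (p * (p + 1)))) ^ j <= (/ ((INR d + 1) * p)) ^ (S j).
Proof. intros Hp Hd H. assert (HD : 1 <= INR d) by (apply (le_INR 1); auto).
  rewrite !pow_inv, <- Rinv_mult. apply Rinv_le_contravar.
  apply pow_pos'; nra.
  destruct (conv_gen d j p Hp Hd) as [E1 E2]. rewrite E1, E2.
  apply Rmult_le_compat_r. left; apply pow_pos'; lra. auto. Qed.

Lemma Vgen n l a K : (1 <= l)%nat -> (a <= l <= a + K)%nat ->
  rsum (fun i => ln (xbar n l i)) a K =
  rsum (fun i => ln (/ sylv i)) a (l - a) + INR (a + K - l) * ln (cc n l).
Proof. intros H1 H2. replace K with ((l - a) + (a + K - l))%nat at 1 by lia.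
  rewrite rsum_split. f_equal. apply rsum_ext; intros; rewrite xbar_lt by lia; auto.
  rewrite (rsum_ext _ (fun _ => ln (cc n l))). apply rsum_const.
  intros; rewrite xbar_ge by lia; auto. Qed.
Lemma Vgen2 n l a K : (l <= a)%nat ->
  rsum (fun i => ln (xbar n l i)) a K = INR K * ln (cc n l).
Proof. intros H. rewrite (rsum_ext _ (fun _ => ln (cc n l))). apply rsum_const.
  intros; rewrite xbar_ge by lia; auto. Qed.

Lemma cc_form n l : (1 <= l)%nat -> (l <= n)%nat ->
  cc n l = / ((INR (n - l) + 1) * sylv_prod (l - 1)).
Proof. intros. unfold cc. rewrite plus_INR. reflexivity. Qed.
Lemma cc_form' n l : (1 <= l)%nat -> (l < n)%nat ->
  cc n (S l) = / (INR (n - l) * (sylv_prod (l - 1) * (sylv_prod (l - 1) + 1))).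
Proof. intros. rewrite cc_Sl by lia. rewrite <- Pi_S. replace (S (l - 1)) with l by lia. reflexivity. Qed.
Lemma sylv_form l : sylv l = sylv_prod (l - 1) + 1.
Proof. reflexivity. Qed.

Lemma polyAll k p : (2 <= k)%nat -> 1 <= p -> (k = 2%nat -> 2 <= p) ->
  (INR k + 1) ^ k * p <= (p + 1) ^ k * INR k ^ (k - 1).
Proof. intros Hk Hp H2. destruct (Nat.eq_dec k 2). subst. simpl. specialize (H2 eq_refl). nra.
  left; apply polyE; auto; lia. Qed.
Lemma polyAll_lt k p : (2 <= k)%nat -> 1 <= p -> (k = 2%nat -> 2 < p) ->
  (INR k + 1) ^ k * p < (p + 1) ^ k * INR k ^ (k - 1).
Proof. intros Hk Hp H2. destruct (Nat.eq_dec k 2). subst. simpl. specialize (H2 eq_refl). nra.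
  apply polyE; auto; lia. Qed.

Lemma step_gen n l a K : (1 <= l)%nat -> (a <= l)%nat -> (S l <= a + K)%nat -> (S l < n)%nat ->
  rsum (fun i => ln (xbar n (S l) i)) a K - rsum (fun i => ln (xbar n l i)) a K =
  ln (/ sylv l * (cc n (S l)) ^ (a + K - S l)) - ln ((cc n l) ^ (a + K - l)).
Proof. intros. rewrite (Vgen n (S l)) by lia. rewrite (Vgen n l) by lia.
  replace (S l - a)%nat with (S (l - a)) by lia. rewrite rsum_last.
  replace (a + (l - a))%nat with l by lia.
  pose proof (cc_pos n l). pose proof (cc_pos n (S l)). pose proof (sylv_pos l).
  rewrite ln_mult, !ln_pow; auto. ring. apply Rinv_0_lt_compat; auto. apply pow_pos'; auto. Qed.

Section VE.
Variables n a : nat.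
Hypothesis Hn : (4 <= n)%nat.
Hypothesis Ha : (1 <= a <= n - 1)%nat.
Definition VE l := rsum (fun i => ln (xbar n l i)) a (n - a).

Lemma polyS j p : (1 <= j)%nat -> 1 <= p -> (j = 1%nat -> 2 <= p) ->
  (INR (S j) + 1) ^ (S j) * p <= (p + 1) ^ (S j) * INR (S j) ^ j.
Proof. intros. pose proof (polyAll (S j) p ltac:(lia) H0 ltac:(intro; apply H1; lia)) as P.
  simpl (S j - 1)%nat in P. rewrite Nat.sub_0_r in P. exact P. Qed.
Lemma polyS_lt j p : (1 <= j)%nat -> 1 <= p -> (j = 1%nat -> 2 < p) ->
  (INR (S j) + 1) ^ (S j) * p < (p + 1) ^ (S j) * INR (S j) ^ j.
Proof. intros. pose proof (polyAll_lt (S j) p ltac:(lia) H0 ltac:(intro; apply H1; lia)) as P.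
  simpl (S j - 1)%nat in P. rewrite Nat.sub_0_r in P. exact P. Qed.

Lemma stepE l : (a <= l <= n - 2)%nat ->
  VE (S l) <= VE l /\ (~ (n = 4%nat /\ l = 2%nat) -> VE (S l) < VE l).
Proof. intros Hl. unfold VE.
  assert (G := step_gen n l a (n - a) ltac:(lia) ltac:(lia) ltac:(lia) ltac:(lia)).
  replace (a + (n - a) - S l)%nat with (n - l - 1)%nat in G by lia.
  replace (a + (n - a) - l)%nat with (S (n - l - 1)) in G by lia.
  rewrite sylv_form, cc_form', cc_form in G by lia.
  replace (n - l)%nat with (S (n - l - 1)) in G by lia.
  set (p := sylv_prod (l - 1)) in G. set (j := (n - l - 1)%nat) in G.
  replace (S j - 1)%nat with j in G by lia.
  assert (Hp : 1 <= p) by apply Pi_ge1.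
  assert (Hd : (1 <= S j)%nat) by lia.
  assert (Pos : 0 < / (p + 1) * (/ (INR (S j) * (p * (p + 1)))) ^ j).
  { apply Rmult_lt_0_compat. apply Rinv_0_lt_compat; lra. apply pow_pos'. apply Rinv_0_lt_compat.
    assert (1 <= INR (S j)) by (apply (le_INR 1); lia). nra. }
  assert (Hj : (1 <= j)%nat) by (unfold j; lia).
  split.
  - assert (I := conv_le (S j) j p Hp Hd (polyS j p Hj Hp ltac:(intro E; unfold p; apply Pi_ge2; unfold j in E; lia))).
    assert (ln (/ (p + 1) * (/ (INR (S j) * (p * (p + 1)))) ^ j) <= ln ((/ ((INR (S j) + 1) * p)) ^ S j)).
    { apply ln_le_mono; auto. }
    lra.
  - intro Hne.
    assert (Hs : j = 1%nat -> 2 < p).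
    { intro E. unfold j in E. assert (l <> 1%nat) by lia. assert (l <> 2%nat) by lia.
      assert (6 <= p) by (unfold p; apply Pi_ge6; lia). lra. }
    assert (I := conv_lt (S j) j p Hp Hd (polyS_lt j p Hj Hp Hs)).
    assert (ln (/ (p + 1) * (/ (INR (S j) * (p * (p + 1)))) ^ j) < ln ((/ ((INR (S j) + 1) * p)) ^ S j)).
    { apply ln_increasing; auto. }
    lra.
Qed.

Lemma chainE_aux m : forall l, m = (n - 1 - l)%nat -> (a <= l <= n - 1)%nat ->
  VE (n - 1) <= VE l /\ ((l <= n - 2)%nat -> ~ (n = 4%nat /\ l = 2%nat) -> VE (n - 1) < VE l).
Proof. induction m; intros l Hm Hl.
  - replace l with (n - 1)%nat by lia. split. lra. intros; lia.
  - destruct (IHm (S l) ltac:(lia) ltac:(lia)) as [H1 _].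
    destruct (stepE l ltac:(lia)) as [H2 H3]. split. lra.
    intros _ Hne. specialize (H3 Hne). lra.
Qed.
Lemma chainE l : (a <= l <= n - 1)%nat ->
  VE (n - 1) <= VE l /\ ((l <= n - 2)%nat -> ~ (n = 4%nat /\ l = 2%nat) -> VE (n - 1) < VE l).
Proof. intros; eapply chainE_aux; eauto. Qed.

Lemma VE_n : VE (n - 1) < VE n.
Proof. unfold VE. rewrite (Vgen n n) by lia. rewrite (Vgen n (n-1)) by lia.
  replace (a + (n - a) - n)%nat with 0%nat by lia. replace (a + (n - a) - (n - 1))%nat with 1%nat by lia.
  replace (n - a)%nat with (S (n - 1 - a)) by lia. rewrite rsum_last.
  replace (a + (n - 1 - a))%nat with (n - 1)%nat by lia.
  assert (ln (cc n (n - 1)) < ln (/ sylv (n - 1))).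
  { apply ln_increasing. apply cc_pos. unfold cc. rewrite sylv_form.
    replace (n - (n - 1) + 1)%nat with 2%nat by lia. replace (n - 1 - 1)%nat with (n - 2)%nat by lia.
    assert (2 <= sylv_prod (n - 2)) by (apply Pi_ge2; lia).
    simpl INR. apply Rinv_lt_contravar. nra. lra. }
  simpl INR. lra. Qed.

Lemma VE_lt_a l : (1 <= l < a)%nat -> VE a < VE l.
Proof. intros H. unfold VE. rewrite !Vgen2 by lia.
  assert (0 < INR (n - a)) by (apply INRpos; lia).
  assert (cc n a < cc n l) by (apply cc_dec_le; lia).
  assert (ln (cc n a) < ln (cc n l)) by (apply ln_increasing; auto; apply cc_pos).
  nra. Qed.

Lemma VE_all l : (1 <= l <= n)%nat -> VE (n - 1) <= VE l /\
  (VE l <= VE (n - 1) -> l = (n - 1)%nat \/ (n = 4%nat /\ (a <= 2)%nat /\ l = 2%nat)).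
Proof. intros Hl. destruct (Nat.eq_dec l n).
  - subst. pose proof VE_n. split. lra. intros; lra.
  - destruct (Nat.lt_ge_cases l a).
    + pose proof (VE_lt_a l ltac:(lia)). destruct (chainE a ltac:(lia)) as [H1 _].
      split. lra. intros; lra.
    + destruct (chainE l ltac:(lia)) as [H1 H2]. split. auto. intros H3.
      destruct (Nat.eq_dec l (n-1)). auto. right.
      destruct (Classical_Prop.classic (n = 4%nat /\ l = 2%nat)) as [C|C]. lia.
      specialize (H2 ltac:(lia) C). lra.
Qed.
End VE.

Lemma keyB (d j : nat) (p : R) : 1 <= p -> (1 <= d)%nat -> (1 <= j)%nat ->
  (INR d + 1) ^ 2 <= (p + 1) * INR d ->
  (INR d + 1) ^ (S j) * p < (p + 1) ^ (S j) * INR d ^ j.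
Proof. intros Hp Hd Hj H. assert (HD : 1 <= INR d) by (apply (le_INR 1); auto).
  assert (H1 : ((INR d + 1) ^ 2) ^ j <= ((p + 1) * INR d) ^ j).
  { apply pow_incr. split; auto. apply pow_le; lra. }
  rewrite <- pow_mult, Rpow_mult_distr in H1.
  assert (H2 : (INR d + 1) ^ (S j) <= (INR d + 1) ^ (2 * j)) by (apply Rle_pow; lia || lra).
  simpl ((p + 1) ^ S j). assert (0 < (INR d + 1) ^ S j) by (apply pow_pos'; lra).
  assert (0 < (p+1) ^ j * INR d ^ j) by (apply Rmult_lt_0_compat; apply pow_pos'; lra).
  nra. Qed.

Lemma Pi_big m : 2 ^ (2 ^ m)%nat <= sylv_prod (S m).
Proof. induction m. simpl. lra.
  rewrite Pi_S. replace (2 ^ S m)%nat with (2 ^ m + 2 ^ m)%nat by (simpl; lia).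
  rewrite pow_add. assert (0 <= 2 ^ (2 ^ m)%nat) by (apply pow_le; lra).
  pose proof (Pi_ge1 (S m)). nra. Qed.

Lemma log_bound n l : (4 <= n)%nat ->
  ~ (INR l <= 2 + log2 (log2 (INR n) + log2 (exp 1))) -> (3 <= l)%nat /\ INR n < sylv l.
Proof. intros Hn H. apply Rnot_le_lt in H. unfold log2 in H. rewrite ln_exp in H.
  pose proof ln_lt_2 as L2. assert (Hn4 : 4 <= INR n) by (replace 4 with (INR 4) by (simpl; lra); apply le_INR; auto).
  assert (Lnn : ln 2 < ln (INR n)) by (apply ln_increasing; lra).
  set (X := ln (INR n) / ln 2 + 1 / ln 2) in H.
  assert (HX : 1 < X). { unfold X. apply (Rmult_lt_reg_r (ln 2)). lra. field_simplify; lra. }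
  assert (0 < ln X) by (rewrite <- ln_1; apply ln_increasing; lra).
  assert (0 < ln X / ln 2) by (apply Rdiv_lt_0_compat; lra).
  assert (Hl : (3 <= l)%nat).
  { destruct (Nat.le_gt_cases 3 l); auto. assert (INR l <= 2). { replace 2 with (INR 2) by (simpl; lra). apply le_INR; lia. } lra. }
  split; auto.
  assert (H1x : ln X < INR (l - 2) * ln 2).
  { rewrite minus_INR by lia. simpl (INR 2).
    assert (ln X / ln 2 < INR l - (1 + 1)) by lra.
    apply (Rmult_lt_compat_r (ln 2)) in H2; [|lra]. unfold Rdiv in H2.
    rewrite Rmult_assoc, Rinv_l in H2 by lra. lra. }
  rewrite <- ln_pow in H1x by lra.
  assert (HX2 : X < 2 ^ (l - 2)) by (apply ln_lt_inv; auto; try lra; apply pow_pos'; lra).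
  assert (H3 : ln (INR n) < 2 ^ (l - 2) * ln 2).
  { assert (ln (INR n) / ln 2 < 2 ^ (l - 2)). { unfold X in HX2. assert (0 < 1 / ln 2) by (apply Rdiv_lt_0_compat; lra). lra. }
    apply (Rmult_lt_compat_r (ln 2)) in H2; [|lra]. unfold Rdiv in H2.
    rewrite Rmult_assoc, Rinv_l in H2 by lra. lra. }
  rewrite <- (pow_INR 2) in H3. simpl (INR 2) in H3. replace (1+1) with 2 in H3 by ring.
  rewrite <- ln_pow in H3 by lra.
  assert (INR n < 2 ^ (2 ^ (l - 2))%nat) by (apply ln_lt_inv; auto; try lra; apply pow_pos'; lra).
  pose proof (Pi_big (l - 2)) as H5. replace (S (l - 2)) with (l - 1)%nat in H5 by lia.
  rewrite sylv_form. lra.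
Qed.

Section VB.
Variables n a b : nat.
Hypothesis Hn : (4 <= n)%nat.
Hypothesis Ha : (1 <= a <= b)%nat.
Hypothesis Hb : (b < n - 1)%nat.
Definition VB l := rsum (fun i => ln (xbar n l i)) a (S b - a).

Lemma b1 l : (1 <= l < a)%nat -> VB (S l) < VB l.
Proof. intros H. unfold VB. rewrite !Vgen2 by lia.
  assert (0 < INR (S b - a)) by (apply INRpos; lia).
  assert (cc n (S l) < cc n l) by (apply cc_dec; lia).
  assert (ln (cc n (S l)) < ln (cc n l)) by (apply ln_increasing; auto; apply cc_pos).
  nra. Qed.

Lemma b2 l : (b < l)%nat -> VB b < VB l.
Proof. intros H. unfold VB. rewrite (Vgen n b) by lia.
  rewrite (rsum_ext (fun i => ln (xbar n l i)) (fun i => ln (/ sylv i))) by (intros; rewrite xbar_lt by lia; auto).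
  replace (S b - a)%nat with (S (b - a)) by lia. rewrite rsum_last.
  replace (a + S (b - a) - b)%nat with 1%nat by lia. replace (a + (b - a))%nat with b by lia.
  assert (ln (cc n b) < ln (/ sylv b)).
  { apply ln_increasing. apply cc_pos. unfold cc. rewrite sylv_form.
    assert (3 <= INR (n - b + 1)) by (apply INR_ge3; lia).
    pose proof (Pi_ge1 (b - 1)). apply Rinv_lt_contravar. nra. nra. }
  simpl INR. lra. Qed.

Lemma b3 l : (a <= l < b)%nat -> INR n < sylv l -> (3 <= l)%nat -> VB (S l) < VB l.
Proof. intros H1 H2 H3. unfold VB.
  assert (G := step_gen n l a (S b - a) ltac:(lia) ltac:(lia) ltac:(lia) ltac:(lia)).
  replace (a + (S b - a) - S l)%nat with (b - l)%nat in G by lia.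
  replace (a + (S b - a) - l)%nat with (S (b - l)) in G by lia.
  rewrite sylv_form in G, H2. rewrite cc_form', cc_form in G by lia.
  set (p := sylv_prod (l - 1)) in *. set (j := (b - l)%nat) in G.
  assert (Hp : 1 <= p) by apply Pi_ge1.
  assert (Hd : (1 <= n - l)%nat) by lia.
  assert (HD : INR l + INR (n - l) = INR n) by (rewrite <- plus_INR; f_equal; lia).
  assert (Hl3 : 3 <= INR l) by (apply INR_ge3; auto).
  assert (HD1 : 1 <= INR (n - l)) by (apply (le_INR 1); lia).
  assert (Hc : (INR (n - l) + 1) ^ 2 <= (p + 1) * INR (n - l)) by (simpl; nra).
  assert (I := conv_lt (n - l) j p Hp Hd (keyB (n - l) j p Hp Hd ltac:(unfold j; lia) Hc)).
  assert (Pos : 0 < / (p + 1) * (/ (INR (n - l) * (p * (p + 1)))) ^ j).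
  { apply Rmult_lt_0_compat. apply Rinv_0_lt_compat; lra. apply pow_pos'. apply Rinv_0_lt_compat. nra. }
  assert (ln (/ (p + 1) * (/ (INR (n - l) * (p * (p + 1)))) ^ j) < ln ((/ ((INR (n - l) + 1) * p)) ^ S j)).
  { apply ln_increasing; auto. }
  lra. Qed.
End VB.

Lemma min_ln n a b l l' : (1 <= l' <= n)%nat -> is_minimizer n a b (xbar n l) ->
  rsum (fun i => ln (xbar n l i)) a (S b - a) <= rsum (fun i => ln (xbar n l' i)) a (S b - a).
Proof. intros H [_ Hm]. specialize (Hm (xbar n l') (in_X_xbar n l' H)).
  unfold prod_range in Hm. rewrite <- !ln_rprod by (intros; apply xbar_pos).
  apply ln_le_mono; auto. apply rprod_pos; intros; apply xbar_pos. Qed.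

Lemma part_a n b : (2 <= n)%nat -> (1 <= b <= n)%nat -> is_minimizer n b b (xbar n b).
Proof. intros Hn Hb. split. apply in_X_xbar; lia. intros y Hy.
  unfold prod_range. replace (S b - b)%nat with 1%nat by lia. simpl.
  rewrite !Rmult_1_r. rewrite xbar_ge by lia.
  pose proof (tail_suf n y Hn Hy b Hb) as T.
  assert (rsum y b (S n - b) <= INR (S n - b) * y b).
  { apply rsum_bounds with (lo := 0). intros; split. apply (X_nonneg n y Hn Hy); lia. apply (X_dec n y Hn Hy); lia. }
  unfold cc. replace (n - b + 1)%nat with (S n - b)%nat by lia.
  assert (0 < INR (S n - b)) by (apply INRpos; lia). pose proof (Pi_pos (b-1)).
  rewrite Rinv_mult. apply (Rmult_le_reg_l (INR (S n - b))); auto.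
  rewrite <- Rmult_assoc, Rinv_r by lra. lra. Qed.

Section DE.
Variables n a : nat.
Hypothesis Hn : (4 <= n)%nat.
Hypothesis Ha : (1 <= a <= n)%nat.

Lemma SMd y : in_X n y ->
  rsum (fun i => ln (xbar n n i)) a (S n - a) <= rsum (fun i => ln (y i)) a (S n - a) /\
  (rsum (fun i => ln (y i)) a (S n - a) <= rsum (fun i => ln (xbar n n i)) a (S n - a) ->
   forall i, (a <= i <= n)%nat -> y i = xbar n n i).
Proof. intros Hy.
  assert (P : forall i, (a <= i < a + (S n - a))%nat -> 0 < y i /\ 0 < xbar n n i).
  { intros i Hi. split. apply (X_pos n y ltac:(lia) Hy); lia. apply xbar_pos. }
  assert (Dd : forall i, (a <= i)%nat -> (S i < a + (S n - a))%nat -> y (S i) <= y i).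
  { intros i H1 H2. apply (X_dec n y ltac:(lia) Hy); lia. }
  assert (Sf : forall m, (a <= m <= a + (S n - a))%nat ->
     rsum (xbar n n) m (a + (S n - a) - m) <= rsum y m (a + (S n - a) - m)).
  { intros m Hm. replace (a + (S n - a) - m)%nat with (S n - m)%nat by lia.
    destruct (Nat.eq_dec m (S n)). subst. rewrite Nat.sub_diag. simpl. lra.
    rewrite suf_le by lia. apply (tail_suf n y ltac:(lia) Hy). lia. }
  split. apply SM; auto.
  intros H i Hi. apply (SM_eq y (xbar n n) a (S n - a) P Dd Sf H). lia.
Qed.

Lemma part_d_min : is_minimizer n a n (xbar n n).
Proof. split. apply in_X_xbar; lia. intros y Hy. destruct (SMd y Hy) as [H _].
  unfold prod_range. rewrite <- !ln_rprod in H by (intros; try apply xbar_pos; apply (X_pos n y ltac:(lia) Hy); lia).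
  destruct (Rle_lt_dec (rprod (xbar n n) a (S n - a)) (rprod y a (S n - a))); auto.
  assert (ln (rprod y a (S n - a)) < ln (rprod (xbar n n) a (S n - a))).
  { apply ln_increasing; auto. apply rprod_pos; intros; apply (X_pos n y ltac:(lia) Hy); lia. }
  lra. Qed.

Lemma part_d_eq y : in_X n y -> prod_range y a n <= prod_range (xbar n n) a n ->
  forall i, (a <= i <= n)%nat -> y i = xbar n n i.
Proof. intros Hy H. destruct (SMd y Hy) as [_ H2]. apply H2.
  unfold prod_range in H. rewrite <- !ln_rprod by (intros; try apply xbar_pos; apply (X_pos n y ltac:(lia) Hy); lia).
  apply ln_le_mono; auto. apply rprod_pos; intros; apply (X_pos n y ltac:(lia) Hy); lia. Qed.
End DE.

Lemma find_l (c : nat -> R) t K : forall l0, t <= c l0 -> c (l0 + S K)%nat <= t ->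
  exists l, (l0 <= l <= l0 + K)%nat /\ c (S l) <= t <= c l.
Proof. induction K; intros l0 H1 H2.
  - exists l0. split. lia. rewrite Nat.add_1_r in H2. lra.
  - destruct (Rle_lt_dec (c (S l0)) t).
    + exists l0. split. lia. lra.
    + destruct (IHK (S l0) ltac:(lra) ltac:(replace (S l0 + S K)%nat with (l0 + S (S K))%nat by lia; auto))
        as [l [Hl Hc]]. exists l. split. lia. auto.
Qed.

Section EE.
Variables n a : nat.
Hypothesis Hn : (4 <= n)%nat.
Hypothesis Ha : (1 <= a <= n - 1)%nat.

Lemma part_e_bound y : in_X n y ->
  VE n a (n - 1) <= rsum (fun i => ln (y i)) a (n - a).
Proof. intros Hy.
  assert (Hn2 : (2 <= n)%nat) by lia.
  assert (Ybd : forall m K, (1 <= m)%nat -> (m + K <= S n)%nat -> INR K * y n <= rsum y m K).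
  { intros m K H1 H2. destruct (rsum_bounds y m K (y n) (y m)) as [L _]; auto.
    intros i Hi; split; apply (X_dec n y Hn2 Hy); lia. }
  set (t := y n).
  assert (T1 : t <= cc n 1).
  { unfold cc. replace (n - 1 + 1)%nat with n by lia. simpl sylv_prod. rewrite Rmult_1_r.
    pose proof (X_sum n y Hn2 Hy). pose proof (Ybd 1%nat n ltac:(lia) ltac:(lia)).
    assert (0 < INR n) by (apply INRpos; lia).
    apply (Rmult_le_reg_l (INR n)); auto. rewrite Rinv_r by lra. unfold t. lra. }
  assert (T2 : cc n (1 + S (n - 2)) <= t).
  { replace (1 + S (n - 2))%nat with n by lia. rewrite cc_n by lia.
    pose proof (tail_suf n y Hn2 Hy n ltac:(lia)). replace (S n - n)%nat with 1%nat in H by lia.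
    simpl in H. unfold t. lra. }
  destruct (find_l (cc n) t (n - 2) 1%nat T1 T2) as [l [Hl [Hc1 Hc2]]].
  assert (Hd : cc n (S l) < cc n l) by (apply cc_dec; lia).
  set (lam := (cc n l - t) / (cc n l - cc n (S l))).
  assert (Hlam : 0 <= lam <= 1).
  { unfold lam. split. unfold Rdiv. apply Rmult_le_pos. lra. left; apply Rinv_0_lt_compat; lra.
    apply (Rmult_le_reg_r (cc n l - cc n (S l))). lra. unfold Rdiv. rewrite Rmult_assoc, Rinv_l by lra. lra. }
  assert (Hlt : lam * cc n (S l) + (1 - lam) * cc n l = t).
  { unfold lam. field. lra. }
  set (ys := fun i => lam * xbar n (S l) i + (1 - lam) * xbar n l i).
  assert (Ypos : forall i, 0 < ys i).
  { intro i. unfold ys. pose proof (xbar_pos n (S l) i). pose proof (xbar_pos n l i).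
    destruct (Req_dec lam 0). subst lam. rewrite H1. lra. nra. }
  assert (SMr : rsum (fun i => ln (ys i)) a (n - a) <= rsum (fun i => ln (y i)) a (n - a)).
  { apply SM.
    - intros i Hi. split. apply (X_pos n y Hn2 Hy); lia. apply Ypos.
    - intros i H1 H2. apply (X_dec n y Hn2 Hy); lia.
    - intros m Hm. replace (a + (n - a) - m)%nat with (n - m)%nat by lia.
      destruct (Nat.eq_dec m n). subst. rewrite Nat.sub_diag. simpl. lra.
      assert (Full : forall f, rsum f m (S n - m) = rsum f m (n - m) + f n).
      { intros f. replace (S n - m)%nat with (S (n - m)) by lia. rewrite rsum_last.
        replace (m + (n - m))%nat with n by lia. reflexivity. }
      assert (Yn : ys n = t). { unfold ys. rewrite !xbar_ge by lia. auto. }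
      assert (Comb : rsum ys m (S n - m) = lam * rsum (xbar n (S l)) m (S n - m) + (1 - lam) * rsum (xbar n l) m (S n - m)).
      { unfold ys. rewrite rsum_plus, !rsum_scal. reflexivity. }
      assert (rsum ys m (S n - m) <= rsum y m (S n - m)).
      { rewrite Comb. destruct (Nat.le_gt_cases m l).
        - rewrite !suf_le by lia. pose proof (tail_suf n y Hn2 Hy m ltac:(lia)). nra.
        - assert (Ey : lam * rsum (xbar n (S l)) m (S n - m) + (1 - lam) * rsum (xbar n l) m (S n - m)
                        = INR (S n - m) * t).
          { rewrite (suf_gt n l m) by lia. rewrite <- Hlt.
            destruct (Nat.eq_dec m (S l)).
            + subst m. rewrite suf_le by lia. rewrite cc_Sl by lia.
              replace (S n - S l)%nat with (n - l)%nat by lia. replace (S l - 1)%nat with l by lia.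
              assert (0 < INR (n - l)) by (apply INRpos; lia). pose proof (Pi_pos l). field. lra.
            + rewrite (suf_gt n (S l) m) by lia. ring. }
          rewrite Ey. apply Ybd; lia. }
      rewrite (Full ys), (Full y) in H. rewrite Yn in H. unfold t in H. lra. }
  assert (Conc : lam * VE n a (S l) + (1 - lam) * VE n a l <= rsum (fun i => ln (ys i)) a (n - a)).
  { unfold VE. rewrite <- !rsum_scal, <- rsum_plus. apply rsum_le. intros i Hi.
    unfold ys. apply ln_concave; auto; apply xbar_pos. }
  destruct (VE_all n a Hn Ha (S l) ltac:(lia)) as [V1 _].
  destruct (VE_all n a Hn Ha l ltac:(lia)) as [V2 _].
  nra.
Qed.

Lemma part_e_min : is_minimizer n a (n - 1) (xbar n (n - 1)).
Proof. split. apply in_X_xbar; lia. intros y Hy. pose proof (part_e_bound y Hy) as H.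
  unfold VE in H. unfold prod_range. replace (S (n - 1) - a)%nat with (n - a)%nat by lia.
  rewrite <- !ln_rprod in H by (intros; try apply xbar_pos; apply (X_pos n y ltac:(lia) Hy); lia).
  destruct (Rle_lt_dec (rprod (xbar n (n-1)) a (n - a)) (rprod y a (n - a))); auto.
  assert (ln (rprod y a (n - a)) < ln (rprod (xbar n (n-1)) a (n - a))).
  { apply ln_increasing; auto. apply rprod_pos; intros; apply (X_pos n y ltac:(lia) Hy); lia. }
  lra. Qed.
End EE.

Lemma tie4 a : (a = 1%nat \/ a = 2%nat) ->
  prod_range (xbar 4 2) a 3 = prod_range (xbar 4 3) a 3.
Proof. intros [-> | ->]; unfold prod_range; simpl; unfold xbar; simpl; unfold sylv; simpl; field. Qed.

Theorem mainTheorem13 (n a b l : nat) :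
  (4 <= n)%nat -> (1 <= a)%nat -> (a <= b)%nat -> (b <= n)%nat ->
  (1 <= l <= n)%nat ->
  (* (a) *)
  (a = b -> is_minimizer n a b (xbar n b)) /\
  (* (b) *)
  ((b < n - 1)%nat -> is_minimizer n a b (xbar n l) ->
     ((a <= l)%nat /\ INR l <= 2 + log2 (log2 (INR n) + log2 (exp 1)))
     \/ l = b) /\
  (* (c) *)
  (a = 1%nat -> b = n ->
     is_minimizer n a b (xbar n n) /\
     forall y, is_minimizer n a b y ->
       forall i, (1 <= i <= n)%nat -> y i = xbar n n i) /\
  (* (d) *)
  (b = n -> (is_minimizer n a b (xbar n l) <-> l = n)) /\
  (* (e) *)
  (b = (n - 1)%nat ->
     (is_minimizer n a b (xbar n l) <->
        l = (n - 1)%nat \/ (n = 4%nat /\ (a = 1%nat \/ a = 2%nat) /\ l = 2%nat))).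
Proof.
  intros Hn Ha Hab Hb Hl.
  split; [|split; [|split; [|split]]].
  - intros E. subst a. apply part_a; lia.
  - intros Hbn Hm. destruct (Nat.eq_dec l b) as [E|Ne]. right; auto.
    destruct (Nat.lt_ge_cases l a).
    + exfalso. pose proof (b1 n a b Hn ltac:(lia) Hbn l ltac:(lia)).
      pose proof (min_ln n a b l (S l) ltac:(lia) Hm). unfold VB in H0. lra.
    + destruct (Nat.lt_ge_cases b l).
      * exfalso. pose proof (b2 n a b Hn ltac:(lia) Hbn l H0).
        pose proof (min_ln n a b l b ltac:(lia) Hm). unfold VB in H1. lra.
      * left. split; auto.
        destruct (Rle_lt_dec (INR l) (2 + log2 (log2 (INR n) + log2 (exp 1)))) as [R|R]; auto.
        exfalso. destruct (log_bound n l Hn ltac:(lra)) as [H3 H4].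
        pose proof (b3 n a b Hn ltac:(lia) Hbn l ltac:(lia) H4 H3).
        pose proof (min_ln n a b l (S l) ltac:(lia) Hm). unfold VB in H1. lra.
  - intros E1 E2. subst a b. split. apply part_d_min; lia.
    intros y [Hy Hm] i Hi. apply (part_d_eq n 1 Hn ltac:(lia) y Hy); auto.
    apply Hm. apply in_X_xbar; lia.
  - intros E. subst b. split.
    + intros [_ Hm]. specialize (Hm (xbar n n) (in_X_xbar n n ltac:(lia))).
      pose proof (part_d_eq n a Hn ltac:(lia) (xbar n l) (in_X_xbar n l Hl) Hm n ltac:(lia)) as Q.
      rewrite !xbar_ge in Q by lia. destruct (Nat.eq_dec l n); auto. exfalso.
      pose proof (cc_dec_le n l n ltac:(lia) ltac:(lia) ltac:(lia) ltac:(lia)). lra.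
    + intros ->. apply part_d_min; lia.
  - intros E. subst b. split.
    + intros Hm. pose proof (min_ln n a (n - 1) l (n - 1) ltac:(lia) Hm) as H.
      replace (S (n - 1) - a)%nat with (n - a)%nat in H by lia.
      destruct (VE_all n a Hn ltac:(lia) l Hl) as [_ H2]. unfold VE in H2.
      destruct (H2 H) as [H3 | [H3 [H4 H5]]]. auto. right. split; auto. split; auto. lia.
    + intros [-> | [E1 [E2 E3]]]. apply part_e_min; lia.
      subst n l. split. apply in_X_xbar; lia. intros y Hy.
      rewrite tie4 by auto. destruct (part_e_min 4 a ltac:(lia) ltac:(lia)) as [_ Hm]. apply Hm; auto.
Qed.
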